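(* Fix a real number $\alpha>1$ and consider the family $f_a(x)=-|x|^{\alpha}+a$, $a\in\mathbb{R}$. Restrict to parameters $a>1$ for which the rescaled post-critical orbit satisfies $2_a\in(-1,0)$, $3_a\in(0,1)$ and $4_a$ lies strictly between $2_a$ and $-2_a$. For such parameters put $t=p_{1,-1}(2_a)>0$ and $g(t)=p_{2_a,-2_a}(4_a)$. Then the inverse function $g^{-1}\colon\mathbb{R}\to\mathbb{R}_+$ is strictly increasing, and $g'(t)>1$. In particular, the value $g(t)=0$, i.e. $4_a=0$ (the super-stable orbit with kneading sequence $RLRC$), is assumed for only one parameter.
   Context: Poincaré coordinates: for real $p\neq q$ and $x$ strictly between $p$ and $q$ (the oriented open interval $(p,q)$, where $p>q$ is allowed), $p_{p,q}(x)=\ln\frac{x-p}{q-x}$. Rescaled orbit: for $n\ge0$ write $n_a=f_a^n(0)/f_a(0)$ (so $0_a=0$, $1_a=1$), i.e. $n_a$ is the $n$-th iterate of $0$ under $x\mapsto 1-a^{\alpha-1}|x|^{\alpha}$. The kneading sequence $RLRC$ means $1_a>0$, $2_a<0$, $3_a>0$, $4_a=0$. *)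

(* Defs.v *)
From Stdlib Require Import Reals.
Open Scope R_scope.

(* |x|^alpha for real alpha > 0, with the convention 0^alpha = 0
   (Stdlib's Rpower 0 alpha would give 1, since ln 0 = 0). *)
Definition absPow (x alpha : R) : R :=
  match Req_EM_T x 0 with
  | left _ => 0
  | right _ => Rpower (Rabs x) alpha
  end.

Definition fam (alpha a x : R) : R := - absPow x alpha + a.

Definition rorb (alpha a : R) (n : nat) : R :=
  Nat.iter n (fam alpha a) 0 / fam alpha a 0.

Definition poinc (p q x : R) : R := ln ((x - p) / (q - x)).

Definition admissible (alpha a : R) : Prop :=
  1 < a /\
  -1 < rorb alpha a 2 < 0 /\
  0 < rorb alpha a 3 < 1 /\
  Rmin (rorb alpha a 2) (- rorb alpha a 2) < rorb alpha a 4 <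
    Rmax (rorb alpha a 2) (- rorb alpha a 2).

Definition tpar (alpha a : R) : R := poinc 1 (-1) (rorb alpha a 2).

Definition gval (alpha a : R) : R :=
  poinc (rorb alpha a 2) (- rorb alpha a 2) (rorb alpha a 4).

(* Main.v *)
Require Import Defs.
From Stdlib Require Import Reals Lra Lia Psatz Classical Ranalysis5.
Open Scope R_scope.

Lemma Rpower_1_base : forall y, Rpower 1 y = 1.
Proof. intro y; unfold Rpower; rewrite ln_1, Rmult_0_r; apply exp_0. Qed.

Lemma Rpower_pos : forall x y, 0 < Rpower x y.
Proof. intros; unfold Rpower; apply exp_pos. Qed.

Lemma Rpower_le1 : forall x y, 0 < x <= 1 -> 0 <= y -> Rpower x y <= 1.
Proof. intros x y Hx Hy. rewrite <- (Rpower_1_base y). apply Rle_Rpower_l; lra. Qed.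

Lemma Rpower_ge1 : forall x y, 1 <= x -> 0 <= y -> 1 <= Rpower x y.
Proof. intros x y Hx Hy. rewrite <- (Rpower_1_base y). apply Rle_Rpower_l; lra. Qed.

Lemma Rpower_lt1 : forall x y, 0 < x < 1 -> 0 < y -> Rpower x y < 1.
Proof. intros x y Hx Hy. rewrite <- (Rpower_1_base y). apply Rlt_Rpower_l; lra. Qed.

Lemma bern : forall al x, 1 <= al -> 0 < x -> 1 + al*(x-1) <= Rpower x al.
Proof.
  intros al x Hal Hx.
  set (phi := fun z => Rpower z al - al * z).
  assert (Hd : forall c, 0 < c -> derivable_pt_lim phi c (al * Rpower c (al-1) - al)).
  { intros c Hc. unfold phi. apply derivable_pt_lim_minus.
    - apply derivable_pt_lim_power; auto.
    - replace al with (al * 1) at 2 by ring. apply derivable_pt_lim_scal. apply derivable_pt_lim_id. }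
  destruct (Rtotal_order x 1) as [Hlt|[Heq|Hgt]].
  - destruct (MVT_cor2 phi (fun c => al * Rpower c (al-1) - al) x 1 Hlt) as [c [Hc1 Hc2]].
    { intros c Hc; apply Hd; lra. }
    unfold phi in Hc1. rewrite Rpower_1_base in Hc1.
    assert (Rpower c (al-1) <= 1) by (apply Rpower_le1; lra).
    assert ((al * Rpower c (al - 1) - al) * (1 - x) <= 0).
    { assert (al * Rpower c (al - 1) <= al * 1) by (apply Rmult_le_compat_l; lra). nra. }
    lra.
  - subst. rewrite Rpower_1_base. lra.
  - destruct (MVT_cor2 phi (fun c => al * Rpower c (al-1) - al) 1 x Hgt) as [c [Hc1 Hc2]].
    { intros c Hc; apply Hd; lra. }
    unfold phi in Hc1. rewrite Rpower_1_base in Hc1.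
    assert (1 <= Rpower c (al-1)) by (apply Rpower_ge1; lra).
    assert (0 <= (al * Rpower c (al - 1) - al) * (x - 1)).
    { apply Rmult_le_pos; [|lra]. assert (al * 1 <= al * Rpower c (al - 1)) by (apply Rmult_le_compat_l; lra). lra. }
    lra.
Qed.

Definition Sf al d := (1+d) * Rpower d al.
Definition Uf al d := 1 - Sf al d.
Definition Vf al d := Rpower (Uf al d) al.
Definition Q4f al d := 1 - (1+d) * Vf al d.
Definition Hf al d := d - Q4f al d.
Definition Sp al d := Rpower d al + (1+d)*(al*Rpower d (al-1)).
Definition Wf al d := al * Rpower (Uf al d) (al-1) * Sp al d.
Definition Q4p al d := - Vf al d + (1+d) * Wf al d.
Definition Gf al d := ln ((Q4f al d + d) / (d - Q4f al d)).
Definition Gp al d := (Q4p al d + 1)/(Q4f al d + d) - (1 - Q4p al d)/(d - Q4f al d).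

Lemma d1x : forall d, derivable_pt_lim (fun x => 1 + x) d 1.
Proof.
  intro d. pose proof (derivable_pt_lim_plus (fun _ => 1) (fun x => x) d 0 1
    (derivable_pt_lim_const 1 d) (derivable_pt_lim_id d)) as H.
  unfold plus_fct in H. rewrite Rplus_0_l in H. exact H.
Qed.

Lemma dS : forall al d, 0 < d -> derivable_pt_lim (Sf al) d (Sp al d).
Proof.
  intros al d Hd. unfold Sf, Sp.
  replace (Rpower d al + (1 + d) * (al * Rpower d (al - 1)))
    with (1 * Rpower d al + (1+d) * (al * Rpower d (al - 1))) by ring.
  apply (derivable_pt_lim_mult (fun x => 1 + x) (fun x => Rpower x al)).
  - apply d1x.
  - apply derivable_pt_lim_power; auto.
Qed.

Lemma dU : forall al d, 0 < d -> derivable_pt_lim (Uf al) d (- Sp al d).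
Proof.
  intros al d Hd. unfold Uf.
  replace (- Sp al d) with (0 - Sp al d) by ring.
  apply (derivable_pt_lim_minus (fun _ => 1) (Sf al)).
  - apply derivable_pt_lim_const.
  - apply dS; auto.
Qed.

Lemma dV : forall al d, 0 < d -> 0 < Uf al d -> derivable_pt_lim (Vf al) d (- Wf al d).
Proof.
  intros al d Hd HU. unfold Vf, Wf.
  replace (- (al * Rpower (Uf al d) (al - 1) * Sp al d))
    with ((al * Rpower (Uf al d) (al - 1)) * (- Sp al d)) by ring.
  apply (derivable_pt_lim_comp (Uf al) (fun x => Rpower x al)).
  - apply dU; auto.
  - apply derivable_pt_lim_power; auto.
Qed.

Lemma dQ4 : forall al d, 0 < d -> 0 < Uf al d -> derivable_pt_lim (Q4f al) d (Q4p al d).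
Proof.
  intros al d Hd HU. unfold Q4f, Q4p.
  replace (- Vf al d + (1 + d) * Wf al d) with (0 - (1 * Vf al d + (1+d) * (- Wf al d))) by ring.
  apply (derivable_pt_lim_minus (fun _ => 1) (fun x => (1+x) * Vf al x)).
  - apply derivable_pt_lim_const.
  - apply (derivable_pt_lim_mult (fun x => 1 + x) (Vf al)).
    + apply d1x.
    + apply dV; auto.
Qed.

Lemma dH : forall al d, 0 < d -> 0 < Uf al d -> derivable_pt_lim (Hf al) d (1 - Q4p al d).
Proof.
  intros al d Hd HU. unfold Hf.
  apply (derivable_pt_lim_minus (fun x => x) (Q4f al)).
  - apply derivable_pt_lim_id.
  - apply dQ4; auto.
Qed.

Lemma dG : forall al d, 0 < d -> 0 < Uf al d -> 0 < Q4f al d + d -> 0 < d - Q4f al d ->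
  derivable_pt_lim (Gf al) d (Gp al d).
Proof.
  intros al d Hd HU HN HD. unfold Gf.
  assert (Hq := dQ4 al d Hd HU).
  assert (HN' : derivable_pt_lim (fun x => Q4f al x + x) d (Q4p al d + 1)).
  { apply (derivable_pt_lim_plus (Q4f al) (fun x => x)); auto. apply derivable_pt_lim_id. }
  assert (HD' : derivable_pt_lim (fun x => x - Q4f al x) d (1 - Q4p al d)).
  { apply (derivable_pt_lim_minus (fun x => x) (Q4f al)); auto. apply derivable_pt_lim_id. }
  assert (Hq' := derivable_pt_lim_div _ _ _ _ _ HN' HD' (Rgt_not_eq _ _ HD)).
  assert (Hl := derivable_pt_lim_comp _ ln _ _ _ Hq' (derivable_pt_lim_ln _ (Rdiv_lt_0_compat _ _ HN HD))).
  unfold comp, div_fct in Hl. 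
  replace (Gp al d) with
    (/ ((Q4f al d + d) / (d - Q4f al d)) *
         (((Q4p al d + 1) * (d - Q4f al d) - (1 - Q4p al d) * (Q4f al d + d)) / (d - Q4f al d)²)).
  - exact Hl.
  - unfold Gp, Rsqr. field. split; lra.
Qed.

Lemma Rpower_split : forall x al, 0 < x -> Rpower x al = x * Rpower x (al - 1).
Proof.
  intros x al Hx. replace al with (1 + (al - 1)) at 1 by ring.
  rewrite Rpower_plus, Rpower_1; auto.
Qed.

Lemma facts : forall al d, 1 < al -> 0 < d < 1 -> 0 < Uf al d ->
  0 < Sf al d /\ Uf al d < 1 /\ 0 < Vf al d /\ Vf al d < 1 /\
  Vf al d = Uf al d * Rpower (Uf al d) (al-1) /\ Rpower (Uf al d) (al - 1) < 1.
Proof.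
  intros al d Hal Hd HU.
  assert (HS : 0 < Sf al d) by (unfold Sf; pose proof (Rpower_pos d al); nra).
  assert (HU1 : Uf al d < 1) by (unfold Uf; lra).
  repeat split; auto.
  - unfold Vf; apply Rpower_pos.
  - unfold Vf; apply Rpower_lt1; lra.
  - unfold Vf; apply Rpower_split; auto.
  - apply Rpower_lt1; lra.
Qed.

Lemma key : forall al d, 1 < al -> 0 < d < 1 -> 0 < Uf al d ->
  Vf al d * (1 - Vf al d) < Wf al d * d * (1 - d).
Proof.
  intros al d Hal Hd HU.
  destruct (facts al d Hal Hd HU) as [HS [HU1 [HV0 [HV1 [HVK HK1]]]]].
  set (K := Rpower (Uf al d) (al - 1)) in *.
  set (A := Rpower d al).
  set (B := Rpower d (al - 1)).
  assert (HAB : A = d * B) by (apply Rpower_split; lra).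
  assert (HA : 0 < A) by apply Rpower_pos.
  assert (HK : 0 < K) by apply Rpower_pos.
  assert (HbA : 1 + al * (d - 1) <= A) by (apply bern; lra).
  assert (HbV : 1 + al * (Uf al d - 1) <= Vf al d) by (unfold Vf; apply bern; lra).
  assert (HSd : Sf al d = (1+d) * A) by reflexivity.
  assert (HUd : Uf al d = 1 - (1+d)*A) by (unfold Uf; rewrite HSd; ring).
  assert (HW : Wf al d * d * (1 - d) = al * K * A * (1-d) * (d + al*(1+d))).
  { unfold Wf, Sp. fold K A B. rewrite HAB. ring. }
  assert (HF : (1 - (1+d)*A) * (1+d) < (1-d) * (d + al*(1+d))).
  { destruct (Rle_or_lt 1 (al*(1-d))) as [H1|H1].
    - assert (0 < (1+d)*(1+d)*A) by (apply Rmult_lt_0_compat; [nra|lra]).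
      assert (al*(1-d)*(1+d) >= 1+d) by nra. nra.
    - assert ((1+d)*(1+d)*(1 - al*(1-d)) <= (1+d)*(1+d)*A) by (apply Rmult_le_compat_l; nra).
      assert (0 < (1+d)*(1-al*(1-d))*d) by (apply Rmult_lt_0_compat; [nra|lra]).
      nra. }
  rewrite HW, HVK.
  assert (H1V : 1 - Vf al d <= al * Sf al d) by (unfold Uf in HbV; lra).
  assert (Uf al d * K * (1 - Uf al d * K) <= Uf al d * K * (al * ((1+d)*A))).
  { apply Rmult_le_compat_l. nra. rewrite <- HVK, <- HSd. lra. }
  assert (Uf al d * K * (al * ((1+d)*A)) < al * K * A * (1 - d) * (d + al * (1 + d))).
  { rewrite HUd.
    replace ((1 - (1 + d) * A) * K * (al * ((1 + d) * A))) with ((al*K*A) * ((1 - (1+d)*A)*(1+d))) by ring.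
    replace (al * K * A * (1 - d) * (d + al * (1 + d))) with ((al*K*A) * ((1-d)*(d+al*(1+d)))) by ring.
    apply Rmult_lt_compat_l; [|exact HF].
    apply Rmult_lt_0_compat; [apply Rmult_lt_0_compat|]; lra. }
  lra.
Qed.

Lemma Hp_neg : forall al d, 1 < al -> 0 < d < 1 -> 0 < Uf al d -> Hf al d = 0 ->
  1 - Q4p al d < 0.
Proof.
  intros al d Hal Hd HU H0.
  pose proof (key al d Hal Hd HU) as Hk.
  unfold Hf, Q4f in H0. unfold Q4p.
  assert (HV0 : (1+d) * Vf al d = 1 - d) by lra.
  assert (HV : Vf al d = (1-d)/(1+d)) by (rewrite <- HV0; field; lra).
  rewrite HV in Hk |- *.
  assert (Hk2 : 2 * d * (1-d) / ((1+d)*(1+d)) < Wf al d * d * (1 - d)).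
  { replace (2 * d * (1-d) / ((1+d)*(1+d))) with ((1 - d) / (1 + d) * (1 - (1 - d) / (1 + d))) by (field; lra).
    exact Hk. }
  assert (Hk3 : 2 / ((1+d)*(1+d)) < Wf al d).
  { apply (Rmult_lt_reg_r (d*(1-d))). nra.
    replace (2 / ((1 + d) * (1 + d)) * (d * (1 - d))) with (2 * d * (1-d) / ((1+d)*(1+d))) by (field; lra).
    lra. }
  assert (Hk4 : 2 / (1+d) < (1+d) * Wf al d).
  { replace (2 / (1+d)) with ((1+d) * (2 / ((1+d)*(1+d)))) by (field; lra).
    apply Rmult_lt_compat_l; lra. }
  replace (1 - (- ((1 - d) / (1 + d)) + (1 + d) * Wf al d)) with (2/(1+d) - (1+d) * Wf al d) by (field; lra).
  lra.
Qed.

Lemma Gp_gt : forall al d, 1 < al -> 0 < d < 1 -> 0 < Uf al d ->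
  0 < Q4f al d + d -> 0 < d - Q4f al d ->
  1 < Gp al d * ((1 - d*d)/2).
Proof.
  intros al d Hal Hd HU HN HD.
  pose proof (key al d Hal Hd HU) as Hk.
  assert (E : Gp al d * ((1 - d*d)/2) - 1 =
     (1+d)*(1+d)*(Wf al d * d * (1-d) - Vf al d * (1 - Vf al d)) / ((Q4f al d + d) * (d - Q4f al d))).
  { unfold Gp, Q4p. unfold Q4f in *. field. split; lra. }
  assert (0 < (1+d)*(1+d)*(Wf al d * d * (1-d) - Vf al d * (1 - Vf al d)) / ((Q4f al d + d) * (d - Q4f al d))).
  { apply Rdiv_lt_0_compat. apply Rmult_lt_0_compat; nra. nra. }
  lra.
Qed.

Definition adm al d := 0 < d < 1 /\ 0 < Uf al d /\ - d < Q4f al d < d.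

Lemma cont_of_deriv : forall f x l, derivable_pt_lim f x l -> continuity_pt f x.
Proof. intros f x l H. exact (derivable_continuous_pt f x (exist _ l H)). Qed.

Lemma cont_eps : forall f x eps, continuity_pt f x -> 0 < eps ->
  exists del, 0 < del /\ forall y, Rabs (y - x) < del -> Rabs (f y - f x) < eps.
Proof.
  intros f x eps H Heps.
  unfold continuity_pt, continue_in, limit1_in, limit_in in H.
  destruct (H eps Heps) as [a [Ha Hy]].
  exists a; split; auto. intros y Hyx.
  destruct (Req_dec y x) as [E|E].
  - subst. rewrite Rminus_diag, Rabs_R0; auto.
  - apply Hy. split.
    + unfold D_x, no_cond; split; auto.
    + simpl. unfold R_dist. auto.
Qed.

Lemma deriv_neg_right : forall f x l, derivable_pt_lim f x l -> l < 0 ->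
  exists del, 0 < del /\ forall y, x < y < x + del -> f y < f x.
Proof.
  intros f x l H Hl.
  destruct (H (- l / 2)) as [del Hdel]. lra.
  exists del. split. apply cond_pos.
  intros y Hy.
  assert (Hh : y - x <> 0) by lra.
  assert (Ha : Rabs (y - x) < del) by (rewrite Rabs_right; lra).
  specialize (Hdel (y - x) Hh Ha).
  replace (x + (y - x)) with y in Hdel by ring.
  apply Rabs_def2 in Hdel. destruct Hdel as [H1 H2].
  assert (Hq : (f y - f x) / (y - x) < 0) by lra.
  assert (0 < y - x) by lra.
  assert (f y - f x < 0).
  { replace (f y - f x) with ((f y - f x) / (y - x) * (y - x)) by (field; lra).
    nra. }
  lra.
Qed.

Lemma Umono : forall al d1 d2, 1 < al -> 0 < d1 <= d2 -> Uf al d2 <= Uf al d1.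
Proof.
  intros al d1 d2 Hal Hd. unfold Uf, Sf.
  assert (Rpower d1 al <= Rpower d2 al) by (apply Rle_Rpower_l; lra).
  pose proof (Rpower_pos d1 al). nra.
Qed.

Lemma no_cross : forall al d1 d2, 1 < al -> 0 < d1 < d2 -> d2 < 1 -> 0 < Uf al d2 ->
  Hf al d1 <= 0 -> Hf al d2 <= 0.
Proof.
  intros al d1 d2 Hal Hd Hd2 HU Hh1.
  destruct (Rle_or_lt (Hf al d2) 0) as [|Hpos]; auto. exfalso.
  assert (Hin : forall x, d1 <= x <= d2 -> 0 < x < 1 /\ 0 < Uf al x).
  { intros x Hx. split. lra. pose proof (Umono al x d2 Hal ltac:(lra)). lra. }
  assert (Hc : forall x, d1 <= x <= d2 -> continuity_pt (Hf al) x).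
  { intros x Hx. destruct (Hin x Hx). eapply cont_of_deriv. apply dH; lra. }
  set (E := fun x => d1 <= x <= d2 /\ Hf al x <= 0).
  destruct (completeness E) as [m [Hub Hlub]].
  { exists d2. intros x [Hx _]. lra. }
  { exists d1. split; [lra|auto]. }
  assert (Hm1 : d1 <= m) by (apply Hub; split; [lra|auto]).
  assert (Hm2 : m <= d2) by (apply Hlub; intros x [Hx _]; lra).
  assert (Hfm : Hf al m <= 0).
  { destruct (Rle_or_lt (Hf al m) 0) as [|Hp]; auto. exfalso.
    destruct (cont_eps (Hf al) m (Hf al m) (Hc m ltac:(lra)) Hp) as [del [Hdel Hc']].
    destruct (classic (exists x, E x /\ m - del < x)) as [[x [[Hx1 Hx2] Hx3]]|Hno].
    - assert (x <= m) by (apply Hub; split; auto).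
      assert (Rabs (x - m) < del) by (apply Rabs_def1; lra).
      specialize (Hc' x H0). apply Rabs_def2 in Hc'. lra.
    - assert (m <= m - del).
      { apply Hlub. intros x Hx. destruct (Rle_or_lt x (m - del)) as [|Hlt]; auto.
        exfalso; apply Hno; exists x; auto. }
      lra. }
  assert (Hm3 : m < d2) by (destruct (Req_dec m d2); [subst; lra | lra]).
  assert (Hright : exists del, 0 < del /\ forall y, m < y < m + del -> Hf al y < 0).
  { destruct (Rle_lt_or_eq_dec _ _ Hfm) as [Hlt|Heq].
    - destruct (cont_eps (Hf al) m (- Hf al m) (Hc m ltac:(lra)) ltac:(lra)) as [del [Hdel Hc']].
      exists del; split; auto. intros y Hy.
      assert (Rabs (y - m) < del) by (apply Rabs_def1; lra).
      specialize (Hc' y H). apply Rabs_def2 in Hc'. lra.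
    - destruct (Hin m ltac:(lra)) as [Hm Hum].
      pose proof (Hp_neg al m Hal Hm Hum Heq) as Hneg.
      destruct (deriv_neg_right (Hf al) m _ (dH al m ltac:(lra) Hum) Hneg) as [del [Hdel Hr]].
      exists del; split; auto. intros y Hy. rewrite <- Heq. apply Hr; auto. }
  destruct Hright as [del [Hdel Hr]].
  set (x := Rmin (m + del/2) d2).
  assert (Hx1 : m < x) by (unfold x; apply Rmin_case; lra).
  assert (Hx2 : x < m + del) by (unfold x; apply Rmin_case_strong; intros; lra).
  assert (Hx3 : x <= d2) by (unfold x; apply Rmin_r).
  assert (E x) by (split; [lra| left; apply Hr; lra]).
  assert (x <= m) by (apply Hub; auto).
  lra.
Qed.

Lemma adm_down : forall al d1 d2, 1 < al -> adm al d2 -> 0 < d1 <= d2 -> adm al d1.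
Proof.
  intros al d1 d2 Hal [Hd2 [HU2 [HQ1 HQ2]]] Hd1.
  assert (HU1 : 0 < Uf al d1) by (pose proof (Umono al d1 d2 Hal Hd1); lra).
  assert (Hd : 0 < d1 < 1) by lra.
  destruct (facts al d1 Hal Hd HU1) as [_ [_ [_ [HV1 _]]]].
  split; auto. split; auto. split.
  - unfold Q4f. nra.
  - destruct (Rle_or_lt (Hf al d1) 0) as [Hh|Hh].
    + destruct (Rle_lt_or_eq_dec _ _ (proj2 Hd1)) as [Hlt|Heq].
      * pose proof (no_cross al d1 d2 Hal ltac:(lra) ltac:(lra) HU2 Hh).
        unfold Hf in H. lra.
      * subst. lra.
    + unfold Hf in Hh. lra.
Qed.

Lemma Gf_mono : forall al d1 d2, 1 < al -> adm al d1 -> adm al d2 -> d1 < d2 ->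
  Gf al d1 < Gf al d2.
Proof.
  intros al d1 d2 Hal H1 H2 Hlt.
  assert (Ha : forall c, d1 <= c <= d2 -> adm al c).
  { intros c Hc. apply (adm_down al c d2 Hal H2). destruct H1. lra. }
  destruct (MVT_cor2 (Gf al) (Gp al) d1 d2 Hlt) as [c [Hc1 Hc2]].
  { intros c Hc. destruct (Ha c Hc) as [Hd [HU [Hq1 Hq2]]]. apply dG; lra. }
  destruct (Ha c ltac:(lra)) as [Hd [HU [Hq1 Hq2]]].
  pose proof (Gp_gt al c Hal Hd HU ltac:(lra) ltac:(lra)).
  assert (0 < Gp al c).
  { destruct (Rle_or_lt (Gp al c) 0); auto.
    assert (0 < (1 - c*c)/2) by nra. nra. }
  nra.
Qed.

Lemma find_d2 : forall al, 1 < al ->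
  exists z, 0 < z < 1 /\ 0 < Uf al z /\ z < Q4f al z.
Proof.
  intros al Hal.
  set (psi := fun x => (1+x)*(1+x)*Rpower x (al-1) - 2).
  assert (Hc : forall x, 1/4 <= x <= 1 -> continuity_pt psi x).
  { intros x Hx. unfold psi.
    apply (continuity_pt_minus (fun x => (1+x)*(1+x)*Rpower x (al-1)) (fun _ => 2)).
    - apply (continuity_pt_mult (fun x => (1+x)*(1+x)) (fun x => Rpower x (al-1))).
      + apply (continuity_pt_mult (fun x => 1+x) (fun x => 1+x));
        eapply cont_of_deriv; apply d1x.
      + eapply cont_of_deriv. apply derivable_pt_lim_power. lra.
    - apply continuity_pt_const. intros a b; reflexivity. }
  assert (H14 : psi (1/4) < 0).
  { unfold psi. assert (Rpower (1/4) (al-1) < 1) by (apply Rpower_lt1; lra).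
    pose proof (Rpower_pos (1/4) (al-1)). nra. }
  assert (H1 : 0 < psi 1) by (unfold psi; rewrite Rpower_1_base; lra).
  destruct (IVT_interv psi (1/4) 1 Hc ltac:(lra) H14 H1) as [z [Hz Hpz]].
  assert (Hz1 : z < 1) by (destruct (Req_dec z 1); [subst; lra|lra]).
  unfold psi in Hpz.
  set (B := Rpower z (al-1)) in *.
  assert (HAB : Rpower z al = z * B) by (apply Rpower_split; lra).
  assert (HS : Sf al z = 2 * z / (1+z)).
  { unfold Sf. rewrite HAB.
    replace B with (((1+z)*(1+z)*B)/((1+z)*(1+z))) by (field; nra).
    replace ((1+z)*(1+z)*B) with 2 by lra.
    field. lra. }
  assert (HU : Uf al z = (1 - z)/(1+z)) by (unfold Uf; rewrite HS; field; lra).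
  assert (HU0 : 0 < Uf al z) by (rewrite HU; apply Rdiv_lt_0_compat; lra).
  exists z. split. lra. split. auto.
  destruct (facts al z Hal ltac:(lra) HU0) as [_ [HU1 [HV0 [HV1 [HVK HK1]]]]].
  assert (Vf al z < Uf al z).
  { rewrite HVK. pose proof (Rpower_pos (Uf al z) (al-1)). nra. }
  unfold Q4f. rewrite HU in H.
  assert ((1+z) * Vf al z < 1 - z).
  { replace (1 - z) with ((1+z) * ((1-z)/(1+z))) by (field; lra). apply Rmult_lt_compat_l; lra. }
  lra.
Qed.

Lemma surj_d : forall al y0, 1 < al -> -1 < y0 < 1 ->
  exists d, adm al d /\ Q4f al d = y0 * d.
Proof.
  intros al y0 Hal Hy.
  destruct (find_d2 al Hal) as [z [Hz [HUz HQz]]].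
  set (eps := 1 + y0).
  set (r := Rpower (eps / (4*al)) (/ (al - 1))).
  set (d1 := Rmin (z/2) r).
  assert (Hr : 0 < r) by apply Rpower_pos.
  assert (Hd1 : 0 < d1) by (unfold d1; apply Rmin_case; lra).
  assert (Hd1z : d1 < z) by (unfold d1; pose proof (Rmin_l (z/2) r); lra).
  assert (Hd1r : d1 <= r) by apply Rmin_r.
  assert (HB : Rpower d1 (al-1) <= eps / (4*al)).
  { assert (Rpower d1 (al-1) <= Rpower r (al-1)) by (apply Rle_Rpower_l; lra).
    unfold r in H. rewrite Rpower_mult in H.
    replace (/ (al - 1) * (al - 1)) with 1 in H by (field; lra).
    rewrite Rpower_1 in H; auto. unfold eps. apply Rdiv_lt_0_compat; lra. }
  assert (HU1 : 0 < Uf al d1) by (pose proof (Umono al d1 z Hal ltac:(lra)); lra).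
  assert (Hphi1 : Q4f al d1 - y0 * d1 < 0).
  { assert (Hb : 1 + al * (Uf al d1 - 1) <= Vf al d1) by (unfold Vf; apply bern; lra).
    set (B := Rpower d1 (al-1)) in *.
    assert (HAB : Rpower d1 al = d1 * B) by (apply Rpower_split; lra).
    assert (HB0 : 0 < B) by apply Rpower_pos.
    unfold Uf, Sf in Hb. rewrite HAB in Hb.
    unfold Q4f.
    assert (H1 : 1 - (1+d1) * Vf al d1 <= - d1 + al * (1+d1)*(1+d1)*d1*B).
    { assert ((1+d1) * (1 + al * (1 - (1 + d1) * (d1 * B) - 1)) <= (1+d1) * Vf al d1)
        by (apply Rmult_le_compat_l; lra). nra. }
    assert (H2 : al * (1+d1)*(1+d1)*B < eps).
    { assert ((1+d1)*(1+d1) < 4) by nra.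
      assert (al * B <= eps / 4).
      { replace (eps/4) with (al * (eps / (4*al))) by (field; lra).
        apply Rmult_le_compat_l; lra. }
      assert (al * B * ((1+d1)*(1+d1)) < al * B * 4) by (apply Rmult_lt_compat_l; nra).
      nra. }
    assert (al * (1+d1)*(1+d1)*d1*B < eps * d1) by nra.
    unfold eps in *. nra. }
  set (phi := fun x => Q4f al x - y0 * x).
  assert (Hc : forall x, d1 <= x <= z -> continuity_pt phi x).
  { intros x Hx. unfold phi.
    assert (0 < Uf al x) by (pose proof (Umono al x z Hal ltac:(lra)); lra).
    apply (continuity_pt_minus (Q4f al) (fun x => y0 * x)).
    - eapply cont_of_deriv. apply dQ4; lra.
    - apply (continuity_pt_scal (fun x => x)). apply derivable_continuous_pt. apply derivable_pt_id. }
  assert (Hphiz : 0 < phi z) by (unfold phi; nra).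
  destruct (IVT_interv phi d1 z Hc Hd1z Hphi1 Hphiz) as [x [Hx Hpx]].
  unfold phi in Hpx.
  exists x. split; [|lra].
  assert (0 < Uf al x) by (pose proof (Umono al x z Hal ltac:(lra)); lra).
  repeat split; try lra; nra.
Qed.

Lemma absPow_0 : forall al, absPow 0 al = 0.
Proof. intro al. unfold absPow. destruct (Req_EM_T 0 0); [reflexivity|congruence]. Qed.

Lemma absPow_nz : forall x al, x <> 0 -> absPow x al = Rpower (Rabs x) al.
Proof. intros x al H. unfold absPow. destruct (Req_EM_T x 0); [congruence|reflexivity]. Qed.

Lemma absPow_scale : forall a x al, 0 < a -> absPow (a*x) al = Rpower a al * absPow x al.
Proof.
  intros a x al Ha. destruct (Req_dec x 0) as [E|E].
  - subst. rewrite Rmult_0_r, absPow_0. ring.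
  - assert (a * x <> 0) by (apply Rmult_integral_contrapositive_currified; lra).
    rewrite !absPow_nz; auto. rewrite Rabs_mult, (Rabs_right a) by lra.
    rewrite Rpower_mult_distr; auto. apply Rabs_pos_lt; auto.
Qed.

Fixpoint qs (al c : R) (n : nat) : R :=
  match n with O => 0 | S m => 1 - c * absPow (qs al c m) al end.

Lemma iter_q : forall al a n, 0 < a ->
  Nat.iter n (fam al a) 0 = a * qs al (Rpower a (al-1)) n.
Proof.
  intros al a n Ha. induction n as [|n IH].
  - simpl. ring.
  - simpl. rewrite IH. unfold fam. rewrite absPow_scale by auto.
    rewrite (Rpower_split a al) by auto. ring.
Qed.

Lemma rorb_q : forall al a n, 0 < a -> rorb al a n = qs al (Rpower a (al-1)) n.
Proof.
  intros al a n Ha. unfold rorb. rewrite iter_q by auto.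
  unfold fam. rewrite absPow_0. field. lra.
Qed.

Lemma c_gt1 : forall al a, 1 < al -> 1 < a -> 1 < Rpower a (al-1).
Proof.
  intros al a Hal Ha. pose proof (Rpower_lt a 0 (al-1) Ha ltac:(lra)) as H. rewrite Rpower_O in H by lra. exact H.
Qed.

Lemma r2 : forall al a, 1 < a -> rorb al a 2 = - (Rpower a (al-1) - 1).
Proof.
  intros al a Ha. rewrite rorb_q by lra. simpl. rewrite absPow_0, Rmult_0_r, Rminus_0_r.
  rewrite absPow_nz by lra. rewrite Rabs_R1, Rpower_1_base. ring.
Qed.

Lemma r3 : forall al a, 1 < al -> 1 < a ->
  rorb al a 3 = Uf al (Rpower a (al-1) - 1).
Proof.
  intros al a Hal Ha. pose proof (c_gt1 al a Hal Ha).
  rewrite rorb_q by lra. change (qs al (Rpower a (al-1)) 3) with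
    (1 - Rpower a (al-1) * absPow (qs al (Rpower a (al-1)) 2) al).
  rewrite <- rorb_q by lra. rewrite r2 by auto.
  rewrite absPow_nz by lra. rewrite Rabs_Ropp, Rabs_right by lra.
  unfold Uf, Sf. ring.
Qed.

Lemma r4 : forall al a, 1 < al -> 1 < a -> 0 < Uf al (Rpower a (al-1) - 1) ->
  rorb al a 4 = Q4f al (Rpower a (al-1) - 1).
Proof.
  intros al a Hal Ha HU. pose proof (c_gt1 al a Hal Ha).
  rewrite rorb_q by lra. change (qs al (Rpower a (al-1)) 4) with
    (1 - Rpower a (al-1) * absPow (qs al (Rpower a (al-1)) 3) al).
  rewrite <- rorb_q by lra. rewrite r3 by auto.
  rewrite absPow_nz by lra. rewrite Rabs_right by lra.
  unfold Q4f, Vf. ring.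
Qed.

Lemma adm_iff : forall al a, 1 < al ->
  admissible al a <-> (1 < a /\ adm al (Rpower a (al-1) - 1)).
Proof.
  intros al a Hal. split.
  - intros [Ha [H2 [H3 H4]]].
    rewrite r2 in H2 by auto. rewrite r3 in H3 by auto.
    split; auto. split. lra. split. lra.
    rewrite r4 in H4 by (auto; lra). rewrite r2 in H4 by auto.
    rewrite Rmin_left, Rmax_right in H4 by lra. lra.
  - intros [Ha [Hd [HU HQ]]]. split; auto.
    rewrite r2, r3, r4 by auto.
    destruct (facts al _ Hal Hd HU) as [_ [HU1 _]].
    rewrite Rmin_left, Rmax_right by lra. repeat split; lra.
Qed.

Definition Tf d := ln ((1+d)/(1-d)).

Lemma tpar_eq : forall al a, 1 < a -> Rpower a (al-1) - 1 < 1 ->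
  tpar al a = Tf (Rpower a (al-1) - 1).
Proof.
  intros al a Ha H. unfold tpar, poinc, Tf. rewrite r2 by auto. f_equal. field. lra.
Qed.

Lemma gval_eq : forall al a, 1 < al -> 1 < a -> 0 < Uf al (Rpower a (al-1) - 1) ->
  gval al a = Gf al (Rpower a (al-1) - 1).
Proof.
  intros al a Hal Ha HU. unfold gval, poinc, Gf. rewrite r2, r4 by auto.
  set (d := Rpower a (al-1) - 1). set (Q := Q4f al d).
  replace (Q - - d) with (Q + d) by ring. replace (- - d - Q) with (d - Q) by ring. reflexivity.
Qed.

Lemma a_of_d : forall al d, 1 < al -> 0 < d ->
  1 < Rpower (1+d) (/(al-1)) /\ Rpower (Rpower (1+d) (/(al-1))) (al-1) - 1 = d.
Proof.
  intros al d Hal Hd. split.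
  - assert (0 < / (al - 1)) by (apply Rinv_0_lt_compat; lra).
    pose proof (Rpower_lt (1+d) 0 (/(al-1)) ltac:(lra) H) as H'. rewrite Rpower_O in H' by lra. exact H'.
  - rewrite Rpower_mult. replace (/ (al - 1) * (al - 1)) with 1 by (field; lra).
    rewrite Rpower_1 by lra. ring.
Qed.

Lemma Tf_pos : forall d, 0 < d < 1 -> 0 < Tf d.
Proof.
  intros d Hd. unfold Tf. rewrite <- ln_1. apply ln_increasing. lra.
  replace ((1+d)/(1-d)) with (1 + 2*d/(1-d)) by (field; lra).
  assert (0 < 2*d/(1-d)) by (apply Rdiv_lt_0_compat; lra). lra.
Qed.

Lemma Tf_mono : forall d1 d2, 0 < d1 -> d1 < d2 -> d2 < 1 -> Tf d1 < Tf d2.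
Proof.
  intros d1 d2 H1 H2 H3. unfold Tf. apply ln_increasing.
  apply Rdiv_lt_0_compat; lra.
  replace ((1+d1)/(1-d1)) with (-1 + 2/(1-d1)) by (field; lra).
  replace ((1+d2)/(1-d2)) with (-1 + 2/(1-d2)) by (field; lra).
  assert (2/(1-d1) < 2/(1-d2)).
  { unfold Rdiv. apply Rmult_lt_compat_l. lra. apply Rinv_lt_contravar; nra. }
  lra.
Qed.

Definition Dt t := (exp t - 1) / (exp t + 1).

Lemma Dt_Tf : forall d, 0 < d < 1 -> Dt (Tf d) = d.
Proof.
  intros d Hd. unfold Dt, Tf. rewrite exp_ln by (apply Rdiv_lt_0_compat; lra).
  field. lra.
Qed.

Lemma dDt : forall t, derivable_pt_lim Dt t ((exp t * (exp t + 1) - exp t * (exp t - 1)) / (exp t + 1)²).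
Proof.
  intro t. unfold Dt.
  assert (He := exp_pos t).
  apply (derivable_pt_lim_div (fun t => exp t - 1) (fun t => exp t + 1)).
  - pose proof (derivable_pt_lim_minus exp (fun _ => 1) t _ _ (derivable_pt_lim_exp t) (derivable_pt_lim_const 1 t)) as H.
    unfold minus_fct in H. rewrite Rminus_0_r in H. exact H.
  - pose proof (derivable_pt_lim_plus exp (fun _ => 1) t _ _ (derivable_pt_lim_exp t) (derivable_pt_lim_const 1 t)) as H.
    unfold plus_fct in H. rewrite Rplus_0_r in H. exact H.
  - lra.
Qed.

Theorem theorem3p1 (alpha : R) (Halpha : 1 < alpha) :
  (forall a, admissible alpha a -> 0 < tpar alpha a) /\
  exists g : R -> R,
    (forall a, admissible alpha a -> g (tpar alpha a) = gval alpha a) /\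
    (forall s : R, exists a, admissible alpha a /\ gval alpha a = s) /\
    (forall a b, admissible alpha a -> admissible alpha b ->
       tpar alpha a < tpar alpha b -> gval alpha a < gval alpha b) /\
    (forall a, admissible alpha a ->
       exists l, derivable_pt_lim g (tpar alpha a) l /\ 1 < l) /\
    (exists! a, admissible alpha a /\ rorb alpha a 4 = 0).
Proof.
  assert (Hinfo : forall a, admissible alpha a ->
    1 < a /\ adm alpha (Rpower a (alpha-1) - 1) /\
    tpar alpha a = Tf (Rpower a (alpha-1) - 1) /\
    gval alpha a = Gf alpha (Rpower a (alpha-1) - 1) /\
    rorb alpha a 4 = Q4f alpha (Rpower a (alpha-1) - 1)).
  { intros a Ha. apply (adm_iff alpha a Halpha) in Ha.
    destruct Ha as [Ha1 Had]. destruct Had as [Hd [HU HQ]] eqn:E.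
    split; auto. split; auto. split. apply tpar_eq; lra.
    split. apply gval_eq; auto. apply r4; auto. }
  assert (Hmk : forall d, adm alpha d -> exists a, admissible alpha a /\ Rpower a (alpha-1) - 1 = d).
  { intros d Hd. destruct (a_of_d alpha d Halpha ltac:(destruct Hd; lra)) as [H1 H2].
    exists (Rpower (1+d) (/(alpha-1))). split; auto. apply adm_iff; auto. rewrite H2. auto. }
  assert (Hmono : forall a b, admissible alpha a -> admissible alpha b ->
       tpar alpha a < tpar alpha b -> gval alpha a < gval alpha b).
  { intros a b Ha Hb Ht.
    destruct (Hinfo a Ha) as [_ [Hda [Hta [Hga _]]]].
    destruct (Hinfo b Hb) as [_ [Hdb [Htb [Hgb _]]]].
    rewrite Hta, Htb in Ht. rewrite Hga, Hgb.
    set (da := Rpower a (alpha-1) - 1) in *. set (db := Rpower b (alpha-1) - 1) in *.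
    apply Gf_mono; auto.
    destruct (Rtotal_order da db) as [|[E|E]]; auto.
    - rewrite E in Ht. lra.
    - destruct Hda as [? _]. destruct Hdb as [? _].
      pose proof (Tf_mono db da ltac:(lra) E ltac:(lra)). lra. }
  split.
  { intros a Ha. destruct (Hinfo a Ha) as [_ [[Hd _] [Ht _]]]. rewrite Ht. apply Tf_pos; auto. }
  exists (fun t => Gf alpha (Dt t)).
  split.
  { intros a Ha. destruct (Hinfo a Ha) as [_ [[Hd _] [Ht [Hg _]]]].
    rewrite Ht, Hg, Dt_Tf; auto. }
  split.
  { intros s.
    set (y0 := (exp s - 1)/(exp s + 1)).
    assert (He := exp_pos s).
    assert (Hy : -1 < y0 < 1).
    { unfold y0. split.
      - replace ((exp s - 1)/(exp s + 1)) with (-1 + 2*exp s/(exp s+1)) by (field; lra).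
        assert (0 < 2 * exp s / (exp s + 1)) by (apply Rdiv_lt_0_compat; lra). lra.
      - replace ((exp s - 1)/(exp s + 1)) with (1 - 2/(exp s+1)) by (field; lra).
        assert (0 < 2 / (exp s + 1)) by (apply Rdiv_lt_0_compat; lra). lra. }
    destruct (surj_d alpha y0 Halpha Hy) as [d [Hd HQ]].
    destruct (Hmk d Hd) as [a [Ha Hda]].
    exists a. split; auto.
    destruct (Hinfo a Ha) as [_ [_ [_ [Hg _]]]]. rewrite Hg, Hda.
    unfold Gf. rewrite HQ. destruct Hd as [Hd _].
    replace ((y0 * d + d) / (d - y0 * d)) with ((1 + y0)/(1 - y0)) by (field; repeat split; nra).
    replace ((1 + y0)/(1 - y0)) with (exp s) by (unfold y0; field; lra).
    apply ln_exp. }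
  split; [exact Hmono|].
  split.
  { intros a Ha. destruct (Hinfo a Ha) as [_ [[Hd [HU [HQ1 HQ2]]] [Ht _]]].
    set (d := Rpower a (alpha-1) - 1) in *.
    set (t0 := tpar alpha a).
    assert (HD : Dt t0 = d) by (unfold t0; rewrite Ht; apply Dt_Tf; auto).
    assert (HG := dG alpha (Dt t0) ltac:(lra) ltac:(rewrite HD; auto) ltac:(rewrite HD; lra) ltac:(rewrite HD; lra)).
    pose proof (derivable_pt_lim_comp Dt (Gf alpha) t0 _ _ (dDt t0) HG) as Hc.
    eexists. split. exact Hc.
    rewrite HD.
    assert (Hx : (exp t0 * (exp t0 + 1) - exp t0 * (exp t0 - 1)) / (exp t0 + 1)² = (1 - d*d)/2).
    { rewrite <- HD. unfold Dt, Rsqr. assert (He := exp_pos t0). field. lra. }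
    rewrite Hx. apply Gp_gt; auto; lra. }
  { destruct (surj_d alpha 0 Halpha ltac:(lra)) as [d [Hd HQ]].
    destruct (Hmk d Hd) as [a [Ha Hda]].
    assert (Hz : forall b, admissible alpha b -> rorb alpha b 4 = 0 -> gval alpha b = 0).
    { intros b Hb H4. destruct (Hinfo b Hb) as [_ [[Hd' _] [_ [Hg H4']]]].
      rewrite Hg. unfold Gf. rewrite <- H4', H4.
      replace ((0 + (Rpower b (alpha - 1) - 1)) / (Rpower b (alpha - 1) - 1 - 0)) with 1
        by (field; lra). apply ln_1. }
    exists a. split.
    - split; auto. destruct (Hinfo a Ha) as [_ [_ [_ [_ H4]]]]. rewrite H4, Hda, HQ. ring.
    - intros b [Hb H4b].
      assert (H4a : rorb alpha a 4 = 0).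
      { destruct (Hinfo a Ha) as [_ [_ [_ [_ H4]]]]. rewrite H4, Hda, HQ. ring. }
      pose proof (Hz a Ha H4a). pose proof (Hz b Hb H4b).
      assert (Heq : tpar alpha a = tpar alpha b).
      { destruct (Rtotal_order (tpar alpha a) (tpar alpha b)) as [Hh|[Hh|Hh]]; auto.
        - pose proof (Hmono a b Ha Hb Hh). lra.
        - pose proof (Hmono b a Hb Ha Hh). lra. }
      destruct (Hinfo a Ha) as [Ha1 [[Hda' _] [Hta _]]].
      destruct (Hinfo b Hb) as [Hb1 [[Hdb' _] [Htb _]]].
      assert (Hc : Rpower a (alpha-1) = Rpower b (alpha-1)).
      { destruct (Rtotal_order (Rpower a (alpha-1)) (Rpower b (alpha-1))) as [Hh|[Hh|Hh]]; auto.
        - pose proof (Tf_mono (Rpower a (alpha-1) - 1) (Rpower b (alpha-1) - 1) ltac:(lra) ltac:(lra) ltac:(lra)). lra.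
        - pose proof (Tf_mono (Rpower b (alpha-1) - 1) (Rpower a (alpha-1) - 1) ltac:(lra) ltac:(lra) ltac:(lra)). lra. }
      assert (Hinv : forall x, 0 < x -> Rpower (Rpower x (alpha-1)) (/(alpha-1)) = x).
      { intros x Hx. rewrite Rpower_mult. replace ((alpha-1) * /(alpha-1)) with 1 by (field; lra).
        apply Rpower_1; auto. }
      rewrite <- (Hinv a), <- (Hinv b), Hc by lra. reflexivity. }
Qed.
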